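(* Let $X_1$, $X_2$ and $Y$ be real Banach spaces, let $A$ be a separable subset of $X_1\oplus_\infty X_2$, and let $\Delta:S_{X_1\oplus_\infty X_2}\to S_Y$ be a surjective isometry. Then there exist separable subspaces $M_1\subseteq X_1$, $M_2\subseteq X_2$ and $N\subseteq Y$ such that $A\subseteq M_1\oplus_\infty M_2$ and $\Delta(S_{M_1\oplus_\infty M_2})=S_N$.
   Context: $X_1\oplus_\infty X_2$ is $X_1\times X_2$ with norm $\|(x_1,x_2)\|=\max\{\|x_1\|,\|x_2\|\}$; $S_E$ denotes the unit sphere of a normed space $E$. *)

(* Defs.v *)
From HB Require Import structures.
From mathcomp Require Import all_boot all_order all_algebra.
From mathcomp Require Import all_classical all_reals all_analysis.
Set Implicit Arguments. Unset Strict Implicit. Unset Printing Implicit Defensive.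
Import Order.TTheory GRing.Theory Num.Theory.
Import numFieldNormedType.Exports.
Local Open Scope classical_set_scope.
Local Open Scope ring_scope.

Definition sphere_in {R : numDomainType} {V : normedModType R} (M : set V) : set V :=
  [set x | M x /\ `|x| = 1].

Definition sphere {R : numDomainType} {V : normedModType R} : set V :=
  sphere_in setT.

Definition closed_subspace {R : numDomainType} {V : normedModType R} (M : set V) : Prop :=
  [/\ M 0, (forall (a : R) (x y : V), M x -> M y -> M (a *: x + y)) & closed M].

Definition separable {T : topologicalType} (A : set T) : Prop :=
  exists D : set T, [/\ countable D, D `<=` A & A `<=` closure D].

(* M1 (+)_oo M2 inside X1 (+)_oo X2 (the product normed module of mathcomp-analysis,
   whose norm is the max norm, see prod_normE). *)
Definition prod_sub {X1 X2 : Type} (M1 : set X1) (M2 : set X2) : set (X1 * X2) :=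
  [set z | M1 z.1 /\ M2 z.2].

(* Main.v *)
Require Import Defs.
From HB Require Import structures.
From mathcomp Require Import all_boot all_order all_algebra.
From mathcomp Require Import all_classical all_reals all_analysis.
From mathcomp Require Import lra.
Import Order.TTheory GRing.Theory Num.Theory.
Import numFieldNormedType.Exports.
Local Open Scope classical_set_scope.
Local Open Scope ring_scope.

Lemma closureP {R : realType} {V : normedModType R} (D : set V) (x : V) :
  closure D x <-> (forall e : R, 0 < e -> exists2 d, D d & `|x - d| < e).
Proof.
split.
  move=> cx e e0.
  have nb : nbhs x (ball x e) by apply/nbhs_ballP; exists e.
  have [d [Dd bd]] := cx _ nb.
  by exists d => //; move: bd; rewrite -ball_normE.
move=> H B /nbhs_ballP [e /= e0 sB].
have [d Dd dx] := H e e0.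
by exists d; split => //; apply: sB; rewrite -ball_normE.
Qed.

Lemma rat_approx {R : realType} (a e : R) : 0 < e -> exists q : rat, `|a - ratr q| < e.
Proof.
move=> e0; have [q] := @rat_in_itvoo R (a - e) (a + e) ltac:(lra).
rewrite in_itv /= => /andP [h1 h2]; exists q.
rewrite ltr_norml; apply/andP; split; lra.
Qed.

Definition Qlin {R : realType} {V : normedModType R} (D : set V) : Prop :=
  D 0 /\ forall (q : rat) x y, D x -> D y -> D (ratr q *: x + y).

Lemma closure_lin (R : realType) (V : normedModType R) (D : set V) (a : R) x y :
  Qlin D -> closure D x -> closure D y -> closure D (a *: x + y).
Proof.
move=> [_ QD] /closureP cx /closureP cy; apply/closureP => e e0.
set c := e / 3.
have c0 : 0 < c by rewrite /c; lra.
have [q hq] := rat_approx a _ (divr_gt0 c0 (ltr_pwDr ltr01 (normr_ge0 x))).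
have [d1 D1 h1] := cx _ (divr_gt0 c0 (ltr_pwDr ltr01 (normr_ge0 (ratr q : R)))).
have [d2 D2 h2] := cy _ c0.
exists (ratr q *: d1 + d2); first exact: QD.
have -> : a *: x + y - (ratr q *: d1 + d2) =
   (a - ratr q) *: x + (ratr q *: (x - d1) + (y - d2)).
  by rewrite scalerBl scalerBr !addrA subrK opprD !addrA; congr (_ + _); exact: addrAC.
apply: (le_lt_trans (ler_normD _ _)).
apply: (le_lt_trans (lerD (lexx _) (ler_normD _ _))).
rewrite (normrZ (a - ratr q)) (normrZ (ratr q)).
have k1 : `|a - ratr q| * `|x| < c.
  apply: (le_lt_trans (y := `|a - ratr q| * (`|x| + 1))).
    by apply: ler_wpM2l => //; lra.
  by rewrite -ltr_pdivlMr // ltr_pwDr.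
have k2 : `|(ratr q : R)| * `|x - d1| < c.
  apply: (le_lt_trans (y := (`|(ratr q : R)| + 1) * `|x - d1|)).
    by apply: ler_wpM2r => //; lra.
  by rewrite mulrC -ltr_pdivlMr // ltr_pwDr.
rewrite /c in k1 k2 h2 *; lra.
Qed.

Lemma countableU {T : Type} (A B : set T) :
  countable A -> countable B -> countable (A `|` B).
Proof.
move=> cA cB.
have -> : A `|` B = \bigcup_(b in [set: bool]) (if b then A else B).
  apply/seteqP; split => x.
    by case=> h; [exists true | exists false].
  by case=> -[] _ h; [left | right].
by apply: bigcup_countable; [exact: countableP | case].
Qed.

Lemma countable_img {T U : Type} (f : T -> U) (A : set T) :
  countable A -> countable (f @` A).
Proof. exact: sub_countable (card_image_le f A). Qed.

Definition comb {R : realType} {V : normedModType R} (t : rat * (V * V)) : V :=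
  ratr t.1 *: t.2.1 + t.2.2.

Fixpoint qs {R : realType} {V : normedModType R} (S : set V) (n : nat) : set V :=
  if n is k.+1 then qs S k `|` comb @` ([set: rat] `*` (qs S k `*` qs S k))
  else S `|` [set 0].

Definition Qspan {R : realType} {V : normedModType R} (S : set V) : set V :=
  \bigcup_(n in [set: nat]) qs S n.

Lemma qs_add {R : realType} {V : normedModType R} (S : set V) n k :
  qs S n `<=` qs S (n + k).
Proof. elim: k => [|k IH]; first by rewrite addn0. by rewrite addnS => x /IH; left. Qed.

Lemma qs_le {R : realType} {V : normedModType R} (S : set V) n m :
  (n <= m)%N -> qs S n `<=` qs S m.
Proof. by move=> /subnKC <-; exact: qs_add. Qed.

Lemma qs_sub {R : realType} {V : normedModType R} (S S' : set V) n :
  S `<=` S' -> qs S n `<=` qs S' n.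
Proof.
move=> sS; elim: n => [|n IH] x /=.
  by case=> h; [left; apply: sS | right].
case=> [h|[t [_ [h1 h2]] <-]]; first by left; apply: IH.
by right; exists t => //; split => //; split; apply: IH.
Qed.

Lemma Qspan_lin {R : realType} {V : normedModType R} (S : set V) : Qlin (Qspan S).
Proof.
split; first by exists 0%N => //; right.
move=> q x y [n _ hx] [m _ hy]; exists (maxn n m).+1 => //=; right.
exists (q, (x, y)) => //; split => //; split => /=.
  exact: qs_le (leq_maxl n m) _ hx.
exact: qs_le (leq_maxr n m) _ hy.
Qed.

Lemma sub_Qspan {R : realType} {V : normedModType R} (S : set V) : S `<=` Qspan S.
Proof. by move=> x h; exists 0%N => //; left. Qed.

Lemma Qspan_mono {R : realType} {V : normedModType R} (S S' : set V) :
  S `<=` S' -> Qspan S `<=` Qspan S'.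
Proof. by move=> sS x [n _ h]; exists n => //; apply: qs_sub h. Qed.

Lemma Qspan_countable {R : realType} {V : normedModType R} (S : set V) :
  countable S -> countable (Qspan S).
Proof.
move=> cS; apply: bigcup_countable; first exact: countableP.
move=> n _; elim: n => [|n IH] /=.
  by apply: countableU => //; exact: countable1.
apply: countableU => //; apply: countable_img; apply: countableX; first exact: countableP.
exact: countableX.
Qed.

Lemma chain_lin {R : realType} {V : normedModType R} (G : nat -> set V) :
  (forall n m, (n <= m)%N -> G n `<=` G m) -> (forall n, Qlin (G n)) ->
  Qlin (\bigcup_(n in [set: nat]) G n).
Proof.
move=> mono lin; split; first by exists 0%N => //; case: (lin 0%N).
move=> q x y [n _ hx] [m _ hy]; exists (maxn n m) => //.
case: (lin (maxn n m)) => _ H; apply: H.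
  exact: mono (leq_maxl n m) _ hx.
exact: mono (leq_maxr n m) _ hy.
Qed.

Lemma normalize_unit {R : realType} {V : normedModType R} (z : V) :
  z != 0 -> `| `|z|^-1 *: z| = 1.
Proof.
move=> z0; rewrite normrZ ger0_norm ?invr_ge0 // mulVf // normr_eq0 //.
Qed.

Lemma normalize_close {R : realType} {V : normedModType R} (x z : V) (d : R) :
  `|x| = 1 -> `|x - z| <= d -> d < 1 ->
  z != 0 /\ `|x - `|z|^-1 *: z| <= 2 * d.
Proof.
move=> x1 xz d1.
have hz : 0 < `|z|.
  have := ler_normD (x - z) z; rewrite subrK x1 => h; lra.
have z0 : z != 0 by rewrite -normr_gt0.
split => //.
have e : z - `|z|^-1 *: z = (`|z| - 1) *: (`|z|^-1 *: z).
  by rewrite scalerBl scale1r scalerA mulfV ?scale1r // gt_eqF.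
have h2 : `|z - `|z|^-1 *: z| <= d.
  rewrite e normrZ normalize_unit // mulr1.
  apply: le_trans xz; rewrite -[X in `|_ - X|]x1 (distrC x z).
  exact: ler_dist_dist.
have := ler_distD z x (`|z|^-1 *: z); lra.
Qed.

Definition nrm {R : realType} {V : normedModType R} (z : V) : V := `|z|^-1 *: z.

Definition Fof {R : realType} {X1 X2 Y : normedModType R} (Delta : X1 * X2 -> Y)
  (S : set (X1 * X2)) : set Y :=
  (Delta \o nrm) @` [set z | [/\ Qspan (fst @` S) z.1, Qspan (snd @` S) z.2 & z != 0]].

Fixpoint Eseq {R : realType} {X1 X2 Y : normedModType R} (Delta : X1 * X2 -> Y)
  (g : Y -> X1 * X2) (D0 : set (X1 * X2)) (n : nat) : set (X1 * X2) :=
  if n is k.+1 then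
    Eseq Delta g D0 k `|` (g \o nrm) @` [set w | Qspan (Fof Delta (Eseq Delta g D0 k)) w /\ w != 0]
  else D0.

Lemma Eseq_le {R : realType} {X1 X2 Y : normedModType R} (Delta : X1 * X2 -> Y)
  (g : Y -> X1 * X2) (D0 : set (X1 * X2)) n m :
  (n <= m)%N -> Eseq Delta g D0 n `<=` Eseq Delta g D0 m.
Proof.
move=> /subnKC <-; elim: (m - n)%N => [|k IH]; first by rewrite addn0.
by rewrite addnS => x /IH; left.
Qed.

Lemma Fof_mono {R : realType} {X1 X2 Y : normedModType R} (Delta : X1 * X2 -> Y)
  (S S' : set (X1 * X2)) : S `<=` S' -> Fof Delta S `<=` Fof Delta S'.
Proof.
move=> sS; apply: image_subset => z [h1 h2 h3]; split => //.
  exact: Qspan_mono (image_subset _ sS) _ h1.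
exact: Qspan_mono (image_subset _ sS) _ h2.
Qed.

Lemma Fof_countable {R : realType} {X1 X2 Y : normedModType R} (Delta : X1 * X2 -> Y)
  (S : set (X1 * X2)) : countable S -> countable (Fof Delta S).
Proof.
move=> cS; apply: countable_img.
apply: (@sub_countable _ _ _ (Qspan (fst @` S) `*` Qspan (snd @` S))).
  by apply: subset_card_le => -[z1 z2] [h1 h2 _].
apply: countableX. all: apply: Qspan_countable. all: exact: countable_img.
Qed.

Lemma Eseq_countable {R : realType} {X1 X2 Y : normedModType R} (Delta : X1 * X2 -> Y)
  (g : Y -> X1 * X2) (D0 : set (X1 * X2)) n :
  countable D0 -> countable (Eseq Delta g D0 n).
Proof.
move=> c0; elim: n => [|n IH] //=.
apply: countableU => //; apply: countable_img.
apply: (@sub_countable _ _ _ (Qspan (Fof Delta (Eseq Delta g D0 n)))).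
  by apply: subset_card_le => w [].
exact: Qspan_countable (Fof_countable Delta _ IH).
Qed.

Lemma norm_fst {R : realType} {X1 X2 : normedModType R} (x : X1 * X2) : `|x.1| <= `|x|.
Proof. by rewrite prod_normE le_max lexx. Qed.

Lemma norm_snd {R : realType} {X1 X2 : normedModType R} (x : X1 * X2) : `|x.2| <= `|x|.
Proof. by rewrite prod_normE le_max lexx orbT. Qed.

Lemma sphereE {R : realType} {V : normedModType R} (x : V) : sphere x <-> `|x| = 1.
Proof. by rewrite /sphere /sphere_in /=; split => [[]|]. Qed.

Lemma closure_sep {R : realType} {V : normedModType R} (L : set V) :
  countable L -> Qlin L -> closed_subspace (closure L) /\ separable (closure L).
Proof.
move=> cL lL; split.
  split; first by apply: subset_closure; case: lL.
    by move=> a x y hx hy; apply: closure_lin.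
  exact: closed_closure.
by exists L; split => //; exact: subset_closure.
Qed.


Lemma union_Qlin {R : realType} {V : normedModType R} (S : nat -> set V) :
  (forall n m, (n <= m)%N -> S n `<=` S m) ->
  Qlin (\bigcup_(n in [set: nat]) Qspan (S n)).
Proof.
move=> mono; apply: chain_lin => [n m nm|n]; last exact: Qspan_lin.
exact: Qspan_mono (mono _ _ nm).
Qed.

Lemma union_countable {R : realType} {V : normedModType R} (S : nat -> set V) :
  (forall n, countable (S n)) -> countable (\bigcup_(n in [set: nat]) Qspan (S n)).
Proof.
move=> cS; apply: bigcup_countable; first exact: countableP.
by move=> n _; apply: Qspan_countable.
Qed.

Lemma approx_closure {R : realType} {X1 X2 : normedModType R}
  (E : nat -> set (X1 * X2)) (x : X1 * X2) :
  (forall e : R, 0 < e -> exists n, exists2 x', E n x' & `|x - x'| < e) ->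
  closure (\bigcup_(n in [set: nat]) Qspan (fst @` E n)) x.1 /\
  closure (\bigcup_(n in [set: nat]) Qspan (snd @` E n)) x.2.
Proof.
move=> H; split; apply/closureP => e e0; have [n [x' Ex' h]] := H e e0.
  exists x'.1; first by exists n => //; apply: sub_Qspan; exists x'.
  exact: le_lt_trans (norm_fst (x - x')) h.
exists x'.2; first by exists n => //; apply: sub_Qspan; exists x'.
exact: le_lt_trans (norm_snd (x - x')) h.
Qed.

Lemma small_delta {R : realType} (e : R) : 0 < e -> exists d : R, [/\ 0 < d, 2 * d < e & d < 1].
Proof.
move=> e0; case: (lerP e 1) => h.
  by exists (e / 4); split; lra.
by exists (1 / 4); split; lra.
Qed.

Theorem lemma3p4 (R : realType) (X1 X2 Y : completeNormedModType R)
  (A : set (X1 * X2)) (Delta : X1 * X2 -> Y) :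
  separable A ->
  (forall x, sphere x -> sphere (Delta x)) ->
  (forall x y, sphere x -> sphere y -> `|Delta x - Delta y| = `|x - y|) ->
  (forall y, sphere y -> exists2 x, sphere x & Delta x = y) ->
  exists (M1 : set X1) (M2 : set X2) (N : set Y),
    [/\ closed_subspace M1 /\ separable M1,
        closed_subspace M2 /\ separable M2,
        closed_subspace N /\ separable N,
        A `<=` prod_sub M1 M2 &
        Delta @` sphere_in (prod_sub M1 M2) = sphere_in N].
Proof.
move=> [D0 [cD0 sD0 AD0]] Ssph iso surj.
have [g hg] : exists g : Y -> X1 * X2, forall y, sphere y -> sphere (g y) /\ Delta (g y) = y.
  have : forall y, exists x, sphere y -> sphere x /\ Delta x = y.
    move=> y; case: (pselect (sphere y)) => h; last by exists 0.
    by have [x sx dx] := surj y h; exists x.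
  by case/choice => g' hg'; exists g'.
pose E := Eseq Delta g D0.
have Emono : forall n m, (n <= m)%N -> E n `<=` E m by move=> n m; exact: Eseq_le.
have cE : forall n, countable (E n) by move=> n; exact: Eseq_countable.
have imgmono : forall (T U : Type) (f : T -> U) (F : nat -> set T),
    (forall n m, (n <= m)%N -> F n `<=` F m) ->
    forall n m, (n <= m)%N -> f @` F n `<=` f @` F m.
  by move=> T U f F mF n m nm; apply: image_subset; apply: mF.
pose L1 := \bigcup_(n in [set: nat]) Qspan (fst @` E n).
pose L2 := \bigcup_(n in [set: nat]) Qspan (snd @` E n).
pose LY := \bigcup_(n in [set: nat]) Qspan (Fof Delta (E n)).
exists (closure L1), (closure L2), (closure LY); split.
- apply: closure_sep; first by apply: union_countable => n; exact: countable_img.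
  exact: union_Qlin (imgmono _ _ _ _ Emono).
- apply: closure_sep; first by apply: union_countable => n; exact: countable_img.
  exact: union_Qlin (imgmono _ _ _ _ Emono).
- apply: closure_sep; first by apply: union_countable => n; exact: Fof_countable.
  by apply: union_Qlin => n m nm; exact: Fof_mono (Emono _ _ nm).
- move=> a Aa; apply: (approx_closure E) => e e0.
  have /closureP/(_ e e0) [d Dd h] := AD0 a Aa.
  by exists 0%N; exists d.
apply/seteqP; split.
  move=> _ [x [[hx1 hx2] nx] <-]; split; last by apply/sphereE; apply: Ssph; apply/sphereE.
  apply/closureP => e e0; have [d [d0 de d1]] := small_delta e e0.
  have /closureP/(_ d d0) [z1 [n1 _ hz1] h1] := hx1.
  have /closureP/(_ d d0) [z2 [n2 _ hz2] h2] := hx2.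
  pose z := (z1, z2).
  have xz : `|x - z| <= d.
    by rewrite prod_normE ge_max; apply/andP; split; exact: ltW.
  have [z0 hz] := normalize_close _ _ _ nx xz d1.
  exists (Delta (nrm z)).
    exists (maxn n1 n2) => //; apply: sub_Qspan; exists z => //; split => //.
      exact: Qspan_mono (imgmono _ _ _ _ Emono _ _ (leq_maxl n1 n2)) _ hz1.
    exact: Qspan_mono (imgmono _ _ _ _ Emono _ _ (leq_maxr n1 n2)) _ hz2.
  rewrite iso; [| by apply/sphereE | by apply/sphereE; exact: normalize_unit].
  exact: le_lt_trans hz de.
move=> y [cy ny].
have sy : sphere y by apply/sphereE.
have [sgy dgy] := hg y sy.
exists (g y) => //; split; last by apply/sphereE.
apply: (approx_closure E) => e e0; have [d [d0 de d1]] := small_delta e e0.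
have /closureP/(_ d d0) [w [n _ hw] h] := cy.
have [w0 hw'] := normalize_close _ _ _ ny (ltW h) d1.
have sw : sphere (nrm w) by apply/sphereE; exact: normalize_unit.
have [sgw dgw] := hg _ sw.
exists n.+1; exists (g (nrm w)); first by right; exists w.
rewrite -(iso _ _ sgy sgw) dgy dgw.
exact: le_lt_trans hw' de.
Qed.
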